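(* Let $G=\bigl((f_j)_{j=1}^n;(\mu^{R})_{\emptyset\ne R\subseteq[n]}\bigr)$ be an $n$-resource selection game, and treat $\mathrm{undefined}$ as $-\infty$ in maxima. (a) $\max_{\emptyset\ne S\subseteq[n]}E_G(S)$ is a real number. (b) If $f_1,\ldots,f_n$ are continuous, then $h_G=\max_{\emptyset\ne S\subseteq[n]}E_G(S)$.
   Context: An $n$-resource selection game is $G=\bigl((f_j)_{j=1}^n;(\mu^{R})_{\emptyset\ne R\subseteq[n]}\bigr)$ with each $f_j:[0,\infty)\to\mathbb{R}$ nondecreasing and each $\mu^R\ge0$. Equalization: for nondecreasing $g_1,\ldots,g_m:[0,\infty)\to\mathbb{R}\cup\{\mathrm{undefined}\}$, $\mathrm{eq}(g_1,\ldots,g_m)(\mu)=g_1(\mu_1)$ if there exist $\mu_1,\ldots,\mu_m\ge0$ summing to $\mu$ with $g_1(\mu_1)=\cdots=g_m(\mu_m)\in\mathbb{R}$, else $\mathrm{undefined}$. For nonempty $S\subseteq[n]$: $E_G(S)=\mathrm{eq}(f_k:k\in S)\bigl(\sum_{\emptyset\ne R\subseteq S}\mu^R\bigr)$; $M_G(S)$ is the set of nonempty $S'\subseteq S$ such that for every $0\le\mu\le\sum_{R\subseteq S,\,R\cap S'\ne\emptyset}\mu^R$, $\mathrm{eq}(f_k:k\in S')(\mu)\ne E_G(S)$ ($\mathrm{undefined}$ differs from every real); $D_G=\{S: E_G(S)\in\mathbb{R},\ M_G(S)=\emptyset\}$; $h_G=\max_{S\in D_G}E_G(S)$. *)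

(* Defs.v *)
From Stdlib Require Import Reals ClassicalEpsilon.
From mathcomp Require Import all_boot.
Set Implicit Arguments. Unset Strict Implicit. Unset Printing Implicit Defensive.
Local Open Scope R_scope.

Definition sumR (X : Type) (s : seq X) (F : X -> R) : R :=
  foldr (fun x acc => F x + acc) 0 s.

(* An n-resource selection game: cost functions f_j (j in [n] = 'I_n),
   considered on [0,oo), and masses mu^R for nonempty R subset of [n]
   (the value of mu at set0 is never used). *)
Record game (n : nat) := Game {
  cost : 'I_n -> R -> R;
  mass : {set 'I_n} -> R }.

Definition valid_game (n : nat) (G : game n) : Prop :=
  (forall j x y, 0 <= x -> x <= y -> cost G j x <= cost G j y) /\
  (forall Rs : {set 'I_n}, Rs != set0 -> 0 <= mass G Rs).

Definition continuous_on_nonneg (g : R -> R) : Prop :=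
  forall x, 0 <= x -> forall eps, 0 < eps -> exists delta, 0 < delta /\
    forall y, 0 <= y -> Rabs (y - x) < delta -> Rabs (g y - g x) < eps.

Definition is_eq (n : nat) (g : 'I_n -> R -> R) (S : {set 'I_n}) (m0 v : R) : Prop :=
  exists m : 'I_n -> R,
    (forall k, k \in S -> 0 <= m k) /\
    sumR (enum S) m = m0 /\
    (forall k, k \in S -> g k (m k) = v).

(* eq(g_k : k in S)(m0); None encodes "undefined".  (For nonempty S and
   nondecreasing g the value is unique, so the choice is irrelevant.) *)
Definition eqv (n : nat) (g : 'I_n -> R -> R) (S : {set 'I_n}) (m0 : R) : option R :=
  match excluded_middle_informative (exists v, is_eq g S m0 v) with
  | left H => Some (proj1_sig (constructive_indefinite_description _ H))
  | right _ => None
  end.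

Definition sum_mu (n : nat) (G : game n) (P : {set 'I_n} -> bool) : R :=
  sumR (enum [set Rs : {set 'I_n} | (Rs != set0) && P Rs]) (mass G).

Definition E_G (n : nat) (G : game n) (S : {set 'I_n}) : option R :=
  eqv (cost G) S (sum_mu G (fun Rs => Rs \subset S)).

Definition in_M_G (n : nat) (G : game n) (S S' : {set 'I_n}) : Prop :=
  S' != set0 /\ S' \subset S /\
  forall m0, 0 <= m0 ->
    m0 <= sum_mu G (fun Rs => (Rs \subset S) && (Rs :&: S' != set0)) ->
    eqv (cost G) S' m0 <> E_G G S.

Definition in_D_G (n : nat) (G : game n) (S : {set 'I_n}) : Prop :=
  S != set0 /\ (exists v, E_G G S = Some v) /\ ~ (exists S', in_M_G G S S').

Definition in_D_Gb (n : nat) (G : game n) (S : {set 'I_n}) : bool :=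
  if excluded_middle_informative (in_D_G G S) then true else false.

(* maximum in R u {-oo}, with None = undefined = -oo *)
Definition maxopt (a b : option R) : option R :=
  match a, b with
  | None, _ => b
  | _, None => a
  | Some x, Some y => Some (Rmax x y)
  end.

Definition maxoptL (s : seq (option R)) : option R := foldr maxopt None s.

Definition maxE (n : nat) (G : game n) : option R :=
  maxoptL [seq E_G G T | T <- enum [set: {set 'I_n}] & T != set0].

Definition h_G (n : nat) (G : game n) : option R :=
  maxoptL [seq E_G G T | T <- enum [set: {set 'I_n}] & in_D_Gb G T].

(* Main.v *)
Require Import Defs.
From Stdlib Require Import Reals Lra ClassicalEpsilon Classical.
From mathcomp Require Import all_boot zify.
Set Implicit Arguments. Unset Strict Implicit.
Local Open Scope R_scope.

Lemma sumR_cons (X : Type) (x : X) s F : sumR (x :: s) F = F x + sumR s F.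
Proof. by []. Qed.
Lemma sumR_nil (X : Type) F : sumR (@nil X) F = 0.
Proof. by []. Qed.

Lemma sumR_add (X : Type) (s : seq X) F F' :
  sumR s (fun x => F x + F' x) = sumR s F + sumR s F'.
Proof. elim: s => [|x s IH]; rewrite ?sumR_nil ?sumR_cons ?IH; lra. Qed.

Lemma eq_sumR_in (X : eqType) (s : seq X) F F' :
  (forall x, x \in s -> F x = F' x) -> sumR s F = sumR s F'.
Proof.
elim: s => [|x s IH] H; rewrite ?sumR_nil ?sumR_cons //.
rewrite H ?mem_head // IH // => y Hy; apply: H; by rewrite in_cons Hy orbT.
Qed.

Lemma sumR_le_in (X : eqType) (s : seq X) F F' :
  (forall x, x \in s -> F x <= F' x) -> sumR s F <= sumR s F'.
Proof.
elim: s => [|x s IH] H; rewrite ?sumR_nil ?sumR_cons; first lra.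
have := H x (mem_head _ _).
have : sumR s F <= sumR s F'.
  apply: IH => y Hy; apply: H; by rewrite in_cons Hy orbT.
lra.
Qed.

Lemma sumR_lt_in (X : eqType) (s : seq X) F F' : s <> [::] ->
  (forall x, x \in s -> F x < F' x) -> sumR s F < sumR s F'.
Proof.
case: s => [//|x s] _ H; rewrite !sumR_cons.
have := H x (mem_head _ _).
have : sumR s F <= sumR s F'.
  apply: sumR_le_in => y Hy; apply: Rlt_le; apply: H; by rewrite in_cons Hy orbT.
lra.
Qed.

Lemma sumR_ge0_in (X : eqType) (s : seq X) F :
  (forall x, x \in s -> 0 <= F x) -> 0 <= sumR s F.
Proof.
move=> H; have := @sumR_le_in X s (fun _ => 0) F H.
suff -> : sumR s (fun _ => 0) = 0 by [].
elim: s {H} => [|x s IH] //; rewrite sumR_cons IH; lra.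
Qed.

Lemma sumR_mem_le (X : eqType) (s : seq X) F x :
  x \in s -> (forall y, y \in s -> 0 <= F y) -> F x <= sumR s F.
Proof.
elim: s => [//|y s IH] Hx H; rewrite sumR_cons.
have H' : forall z, z \in s -> 0 <= F z.
  move=> z Hz; apply: H; by rewrite in_cons Hz orbT.
move: Hx; rewrite in_cons => /orP [/eqP ->|Hx].
- have := sumR_ge0_in H'; lra.
- have := IH Hx H'; have := H y (mem_head _ _); lra.
Qed.

Lemma sumR_filter (X : Type) (p : pred X) (s : seq X) F :
  sumR (filter p s) F = sumR s (fun x => if p x then F x else 0).
Proof.
elim: s => [|x s IH] //=; case: (p x); rewrite ?sumR_cons IH //; lra.
Qed.

Definition supR (E : R -> Prop) : R :=
  match excluded_middle_informative (bound E /\ exists x, E x) with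
  | left h => proj1_sig (completeness E (proj1 h) (proj2 h))
  | right _ => 0
  end.

Lemma supR_spec E : bound E -> (exists x, E x) -> is_lub E (supR E).
Proof.
move=> Hb He; rewrite /supR.
case: excluded_middle_informative => [h|[]]; last by split.
by case: (completeness E _ _).
Qed.

Lemma lub_approx E m eps : is_lub E m -> 0 < eps -> exists x, E x /\ m - eps < x.
Proof.
move=> [Hu Hl] He; apply: NNPP => Hn.
have : m <= m - eps; last lra.
apply: Hl => x Ex.
apply: Rnot_lt_le => Hx; apply: Hn; by exists x.
Qed.

Definition monoR (g : R -> R) := forall x y, 0 <= x -> x <= y -> g x <= g y.

Definition EG (g : R -> R) (B v : R) (x : R) := 0 <= x <= B /\ (x = 0 \/ g x <= v).
Definition EH (g : R -> R) (B v : R) (x : R) := 0 <= x <= B /\ (x = 0 \/ g x < v).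
Definition Gs g B v := supR (EG g B v).
Definition Hs g B v := supR (EH g B v).

Lemma EG_lub g B v : 0 <= B -> is_lub (EG g B v) (Gs g B v).
Proof.
move=> hB; apply: supR_spec; last by exists 0; split; [lra|left].
exists B => x [[? ?] _]; lra.
Qed.

Lemma EH_lub g B v : 0 <= B -> is_lub (EH g B v) (Hs g B v).
Proof.
move=> hB; apply: supR_spec; last by exists 0; split; [lra|left].
exists B => x [[? ?] _]; lra.
Qed.

Lemma Gs_range g B v : 0 <= B -> 0 <= Gs g B v <= B.
Proof.
move=> hB; have [Hu Hl] := EG_lub g v hB; split.
- apply: Hu; split; [lra|by left].
- apply: Hl => x [[? ?] _]; lra.
Qed.

Lemma Hs_range g B v : 0 <= B -> 0 <= Hs g B v <= B.
Proof.
move=> hB; have [Hu Hl] := EH_lub g v hB; split.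
- apply: Hu; split; [lra|by left].
- apply: Hl => x [[? ?] _]; lra.
Qed.

Lemma Hs_le_Gs g B v : 0 <= B -> Hs g B v <= Gs g B v.
Proof.
move=> hB; have [Hu Hl] := EH_lub g v hB; have [Gu Gl] := EG_lub g v hB.
apply: Hl => x [Hx [H0|H1]]; apply: Gu; split => //; [by left|right; lra].
Qed.

Lemma Gs_val g B v : 0 <= B -> continuous_on_nonneg g -> g 0 <= v ->
  g (Gs g B v) <= v.
Proof.
move=> hB hc h0; have [Gu Gl] := EG_lub g v hB.
have [G0 GB] := Gs_range g v hB.
apply: Rnot_lt_le => Hlt.
have [d [Hd Hc]] := hc _ G0 (g (Gs g B v) - v) ltac:(lra).
have [x [[[x0 xB] Hx] Hxl]] := lub_approx (EG_lub g v hB) Hd.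
have xle : x <= Gs g B v by apply: Gu; split.
have := Hc x x0 ltac:(apply: Rabs_def1; lra).
move/Rabs_def2 => [_ h2].
case: Hx => [Hx|Hx]; last lra.
subst x; lra.
Qed.

Lemma Hs_val g B v : 0 <= B -> continuous_on_nonneg g ->
  Hs g B v < B -> v <= g (Hs g B v).
Proof.
move=> hB hc hlt; have [Hu Hl] := EH_lub g v hB.
have [H0 HB] := Hs_range g v hB.
apply: Rnot_lt_le => Hlt.
have [d [Hd Hc]] := hc _ H0 (v - g (Hs g B v)) ltac:(lra).
set y := Rmin (Hs g B v + d / 2) B.
have yge : Hs g B v < y.
  rewrite /y; apply: Rmin_glb_lt; lra.
have yle : y <= Hs g B v + d / 2 by apply: Rmin_l.
have yB : y <= B by apply: Rmin_r.
have : y <= Hs g B v; last lra.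
apply: Hu; split; first lra.
right; have := Hc y ltac:(lra) ltac:(apply: Rabs_def1; lra).
move/Rabs_def2 => [h1 _]; lra.
Qed.

Lemma Hs_left g B v eps : 0 <= B -> 0 < eps ->
  exists u, u < v /\ forall w, u < w -> Hs g B v - eps <= Hs g B w.
Proof.
move=> hB he.
have [x [[xr Hx] Hxl]] := lub_approx (EH_lub g v hB) he.
case: Hx => [Hx|Hx].
- exists (v - 1); split; first lra.
  move=> w _; have [Hu _] := EH_lub g w hB.
  have : x <= Hs g B w by apply: Hu; split => //; left.
  lra.
- exists (g x); split => // w Hw.
  have [Hu _] := EH_lub g w hB.
  have : x <= Hs g B w by apply: Hu; split => //; right; lra.
  lra.
Qed.

Lemma Hs_right g B v eps : 0 <= B -> 0 < eps -> monoR g ->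
  exists w, v < w /\ forall u, u < w -> Hs g B u <= Gs g B v + eps.
Proof.
move=> hB he hm.
have [G0 GB] := Gs_range g v hB.
case: (Rle_lt_dec B (Gs g B v + eps)) => hc.
- exists (v + 1); split; first lra.
  move=> u _; have [_ h] := Hs_range g u hB; lra.
- set y := Gs g B v + eps.
  have gy : v < g y.
    apply: Rnot_le_lt => hy.
    have [Gu _] := EG_lub g v hB.
    have : y <= Gs g B v by apply: Gu; split; [rewrite /y; lra|right].
    rewrite /y; lra.
  exists (g y); split => // u Hu.
  have [_ Hl] := EH_lub g u hB.
  apply: Hl => x [[x0 xB] Hx]; apply: Rnot_lt_le => Hxy.
  case: Hx => [Hx|Hx]; first (rewrite /y in Hxy; lra).
  have := hm y x ltac:(rewrite /y; lra) ltac:(lra); lra.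
Qed.

Lemma Gs_top g B v : 0 <= B -> g B <= v -> Gs g B v = B.
Proof.
move=> hB hv; have [Gu _] := EG_lub g v hB; have [_ h] := Gs_range g v hB.
have : B <= Gs g B v by apply: Gu; split; [lra|right].
lra.
Qed.

Lemma sumH_left (X : Type) (f : X -> R -> R) B (ks : seq X) v eps : 0 <= B -> 0 < eps ->
  exists u, u < v /\ forall w, u < w ->
    sumR ks (fun k => Hs (f k) B v) - eps <= sumR ks (fun k => Hs (f k) B w).
Proof.
move=> hB; elim: ks eps => [|k ks IH] eps he.
  exists (v - 1); split; first lra. move=> w _; rewrite !sumR_nil; lra.
have [u1 [h1 H1]] := Hs_left (f k) v hB (ltac:(lra) : 0 < eps / 2).
have [u2 [h2 H2]] := IH (eps / 2) ltac:(lra).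
exists (Rmax u1 u2); split; first by apply: Rmax_lub_lt.
move=> w hw; rewrite !sumR_cons.
have := H1 w (Rle_lt_trans _ _ _ (Rmax_l _ _) hw).
have := H2 w (Rle_lt_trans _ _ _ (Rmax_r _ _) hw).
lra.
Qed.

Lemma sumH_right (X : eqType) (f : X -> R -> R) B (ks : seq X) v eps : 0 <= B -> 0 < eps ->
  (forall k, k \in ks -> monoR (f k)) ->
  exists w, v < w /\ forall u, u < w ->
    sumR ks (fun k => Hs (f k) B u) <= sumR ks (fun k => Gs (f k) B v) + eps.
Proof.
move=> hB; elim: ks eps => [|k ks IH] eps he hm.
  exists (v + 1); split; first lra. move=> w _; rewrite !sumR_nil; lra.
have [w1 [h1 H1]] := @Hs_right (f k) B v (eps / 2) hB (ltac:(lra) : 0 < eps / 2) (hm k (mem_head _ _)).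
have [w2 [h2 H2]] := IH (eps / 2) ltac:(lra)
   ltac:(move=> j hj; apply: hm; by rewrite in_cons hj orbT).
exists (Rmin w1 w2); split; first by apply: Rmin_glb_lt.
move=> u hu; rewrite !sumR_cons.
have := H1 u (Rlt_le_trans _ _ _ hu (Rmin_l _ _)).
have := H2 u (Rlt_le_trans _ _ _ hu (Rmin_r _ _)).
lra.
Qed.

Lemma list_min (X : eqType) (ks : seq X) (F : X -> R) : ks <> [::] ->
  exists V, (forall k, k \in ks -> V <= F k) /\ exists k, k \in ks /\ F k = V.
Proof.
elim: ks => [//|k ks IH] _.
case: ks IH => [|k' ks'] IH.
  exists (F k); split; last by exists k; rewrite mem_head.
  move=> j; rewrite mem_seq1 => /eqP ->; lra.
have [V [HV [j [hj hjV]]]] := IH ltac:(by []).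
case: (Rle_lt_dec (F k) V) => hc.
- exists (F k); split; last by exists k; rewrite mem_head.
  move=> i; rewrite in_cons => /orP [/eqP ->|hi]; first lra.
  have := HV i hi; lra.
- exists V; split; last by exists j; rewrite in_cons hj orbT.
  move=> i; rewrite in_cons => /orP [/eqP ->|hi]; first lra.
  by apply: HV.
Qed.

Lemma interp (X : eqType) (ks : seq X) (a b : X -> R) B : uniq ks ->
  (forall k, k \in ks -> a k <= b k) -> sumR ks a <= B <= sumR ks b ->
  exists x : X -> R, (forall k, k \in ks -> a k <= x k <= b k) /\ sumR ks x = B.
Proof.
elim: ks B => [|k ks IH] B.
  move=> _ _; rewrite !sumR_nil => hB. exists a; split => //; rewrite sumR_nil; lra.
rewrite cons_uniq => /andP [kn un] hab; rewrite !sumR_cons => hB.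
set xk := Rmax (a k) (B - sumR ks b).
have hak := hab k (mem_head _ _).
have hab' : forall j, j \in ks -> a j <= b j.
  move=> j hj; apply: hab; by rewrite in_cons hj orbT.
have hle : sumR ks a <= sumR ks b by apply: sumR_le_in.
have h1 : a k <= xk := Rmax_l _ _.
have h2 : B - sumR ks b <= xk := Rmax_r _ _.
have h3 : xk <= b k by apply: Rmax_lub; lra.
have h4 : xk <= B - sumR ks a by apply: Rmax_lub; lra.
have [x' [Hx' Hs]] := IH (B - xk) un hab' ltac:(lra).
exists (fun j => if j == k then xk else x' j); split.
- move=> j; rewrite in_cons => /orP [/eqP ->|hj] /=; first by rewrite eqxx; split; lra.
  have -> : (j == k) = false by apply/eqP => e; subst j; rewrite hj in kn.
  by apply: Hx'.
- rewrite sumR_cons /= eqxx (@eq_sumR_in _ _ _ x'); first lra.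
  move=> j hj; have -> // : (j == k) = false.
  by apply/eqP => e; subst j; rewrite hj in kn.
Qed.

Lemma waterfill (X : eqType) (f : X -> R -> R) (ks : seq X) (mu : X -> R) (e B : R) :
  ks <> [::] -> uniq ks ->
  (forall k, k \in ks -> monoR (f k)) ->
  (forall k, k \in ks -> continuous_on_nonneg (f k)) ->
  (forall k, k \in ks -> 0 <= mu k /\ f k (mu k) = e) ->
  sumR ks mu <= B ->
  exists v (x : X -> R), (forall k, k \in ks -> 0 <= x k /\ f k (x k) = v) /\ sumR ks x = B.
Proof.
move=> kne ku hm hc hmu hsum.
have hB : 0 <= B.
  have : 0 <= sumR ks mu by apply: sumR_ge0_in => k hk; case: (hmu k hk).
  lra.
have muB : forall k, k \in ks -> mu k <= B.
  move=> k hk; have := @sumR_mem_le _ ks mu k hk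
    ltac:(move=> j hj; by case: (hmu j hj)); lra.
have [V [HV [k0 [hk0 hk0V]]]] := list_min (fun k => f k B) kne.
have eV : e <= V.
  have [m0 <-] := hmu k0 hk0; rewrite -hk0V.
  by apply: hm => //; apply: muB.
have f0 : forall k, k \in ks -> f k 0 <= e.
  move=> k hk; have [m0 <-] := hmu k hk; apply: hm => //; lra.
set SH := fun v => sumR ks (fun k => Hs (f k) B v).
set SG := fun v => sumR ks (fun k => Gs (f k) B v).
set W := fun v => e <= v <= V /\ SH v <= B.
have We : W e.
  split; first lra.
  apply: Rle_trans hsum; apply: sumR_le_in => k hk.
  have [_ Hl] := EH_lub (f k) e hB; apply: Hl => x [[x0 xB] Hx].
  have [m0 me] := hmu k hk.
  case: Hx => [->//|Hx]; apply: Rnot_lt_le => hlt.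
  have := hm k hk (mu k) x m0 ltac:(lra); lra.
have Wlub : is_lub W (supR W).
  apply: supR_spec; last by exists e.
  by exists V => v [[_ ?] _].
set vs := supR W.
have [Wu Wl] := Wlub.
have vse : e <= vs by apply: Wu.
have vsV : vs <= V by apply: Wl => v [[_ ?] _].
have hL : SH vs <= B.
  apply: Rnot_lt_le => hlt.
  have [u [hu Hu]] := @sumH_left _ f B ks vs ((SH vs - B) / 2) hB ltac:(lra).
  have [w [Ww hw]] : exists w, W w /\ u < w.
    apply: NNPP => hn.
    have : vs <= u; last lra.
    apply: Wl => w Ww; apply: Rnot_lt_le => hw; apply: hn; by exists w.
  have := Hu w hw; have [_ hWw] := Ww; rewrite /SH in hlt hWw *; lra.
have hU : B <= SG vs.
  apply: Rnot_lt_le => hlt.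
  case: (Rle_lt_dec V vs) => hV.
  - have hvs : vs = V by lra.
    have : Gs (f k0) B vs <= SG vs.
      apply: (@sumR_mem_le _ ks (fun k => Gs (f k) B vs) k0 hk0).
      move=> j hj; by case: (Gs_range (f j) vs hB).
    rewrite Gs_top //; first lra.
    rewrite hk0V; lra.
  - have [w [hw Hw]] := @sumH_right _ f B ks vs ((B - SG vs) / 2) hB ltac:(lra) hm.
    set v := Rmin V ((vs + w) / 2).
    have hv1 : vs < v by apply: Rmin_glb_lt; lra.
    have hv2 : v < w.
      apply: Rle_lt_trans (Rmin_r _ _) _; lra.
    have hv3 : v <= V := Rmin_l _ _.
    have : W v.
      split; first lra.
      have := Hw v hv2; rewrite /SH /SG in hlt *; lra.
    move=> /Wu; rewrite -/vs; lra.
have [x [Hx Hsx]] := @interp _ ks (fun k => Hs (f k) B vs) (fun k => Gs (f k) B vs) B ku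
   ltac:(move=> k _; exact: Hs_le_Gs) ltac:(rewrite /SH /SG in hL hU; lra).
exists vs, x; split => // k hk.
have [hx1 hx2] := Hx k hk.
have [H0 HB] := Hs_range (f k) vs hB.
have [G0 GB] := Gs_range (f k) vs hB.
have fk0 := f0 k hk.
split; first lra.
apply: Rle_antisym.
- apply: Rle_trans (@Gs_val (f k) B vs hB (hc k hk) ltac:(lra)).
  apply: hm => //; lra.
- case: (Rle_lt_dec B (Hs (f k) B vs)) => hH.
  + have -> : x k = B by lra.
    have := HV k hk; lra.
  + apply: Rle_trans (@Hs_val (f k) B vs hB (hc k hk) hH) _.
    apply: hm => //.
Qed.

Lemma sumR_enum (T : finType) (A : {pred T}) (F : T -> R) :
  sumR (enum A) F = sumR (Finite.enum T) (fun x => if x \in A then F x else 0).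
Proof. by rewrite /enum_mem sumR_filter. Qed.

Lemma sumR_zero (X : eqType) (s : seq X) F : (forall x, x \in s -> F x = 0) -> sumR s F = 0.
Proof.
move=> H; rewrite (eq_sumR_in H); elim: s {H} => [|x s IH] //; rewrite sumR_cons IH; lra.
Qed.

Lemma sum_mu_ext n (G : game n) P P' : (forall Rs, P Rs = P' Rs) -> sum_mu G P = sum_mu G P'.
Proof.
move=> H; rewrite /sum_mu; congr sumR; apply: eq_enum => Rs; by rewrite !inE H.
Qed.

Lemma sum_mu_split n (G : game n) P Q :
  sum_mu G P = sum_mu G (fun Rs => P Rs && Q Rs) + sum_mu G (fun Rs => P Rs && ~~ Q Rs).
Proof.
rewrite /sum_mu !sumR_enum -sumR_add; apply: eq_sumR_in => Rs _; rewrite !inE.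
case: (Rs != set0) => /=; last lra. case: (P Rs) => /=; last lra. case: (Q Rs) => /=; lra.
Qed.

Lemma sum_mu_ge0 n (G : game n) P : valid_game G -> 0 <= sum_mu G P.
Proof.
move=> [_ hm]; apply: sumR_ge0_in => Rs; rewrite mem_enum inE => /andP [h _]; exact: hm.
Qed.

Lemma enum_neq0 (T : finType) (S : {set T}) : S != set0 -> enum S <> [::].
Proof.
move=> hS he; move/set0Pn: hS => [x hx].
by rewrite -mem_enum he in hx.
Qed.

Lemma is_eq_unique n (g : 'I_n -> R -> R) S m0 v w : S != set0 ->
  (forall k, k \in S -> monoR (g k)) ->
  is_eq g S m0 v -> is_eq g S m0 w -> v = w.
Proof.
move=> hS hm.
suff H : forall v w, is_eq g S m0 v -> is_eq g S m0 w -> ~ v < w.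
  move=> h1 h2; have := H _ _ h1 h2; have := H _ _ h2 h1; lra.
move=> {}v {}w [m [m0p [ms mv]]] [m' [m0p' [ms' mv']]] hlt.
have : sumR (enum S) m < sumR (enum S) m'; last by rewrite ms ms'; lra.
apply: sumR_lt_in; first exact: enum_neq0.
move=> k; rewrite mem_enum => hk.
apply: Rnot_le_lt => hle.
have := hm k hk _ _ (m0p' k hk) hle; rewrite mv // mv' //; lra.
Qed.

Lemma eqv_spec n (g : 'I_n -> R -> R) S m0 w : eqv g S m0 = Some w -> is_eq g S m0 w.
Proof.
rewrite /eqv; case: excluded_middle_informative => // h [<-].
by case: (constructive_indefinite_description _ h).
Qed.

Lemma eqv_some n (g : 'I_n -> R -> R) S m0 v : is_eq g S m0 v ->
  exists w, eqv g S m0 = Some w /\ is_eq g S m0 w.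
Proof.
move=> h; rewrite /eqv; case: excluded_middle_informative => [h'|[]]; last by exists v.
case: (constructive_indefinite_description _ h') => w hw /=; by exists w.
Qed.

Lemma core n (G : game n) S S' M : valid_game G ->
  (forall j, continuous_on_nonneg (cost G j)) ->
  E_G G S = Some M ->
  (forall T v, T != set0 -> E_G G T = Some v -> v <= M) ->
  in_M_G G S S' ->
  S :\: S' != set0 /\ E_G G (S :\: S') = Some M.
Proof.
move=> hv hc hE hmax [S'ne [S'S HM]].
have hmono : forall k, monoR (cost G k) by move=> k x y; case: hv => h _; apply: h.
have [mu [mu0 [musum muv]]] := eqv_spec hE.
set a := sumR (enum S') mu.
have S'Sk : forall k, k \in S' -> k \in S by move=> k; apply: (subsetP S'S).
have ha0 : 0 <= a by apply: sumR_ge0_in => k; rewrite mem_enum => hk; apply: mu0; apply: S'Sk.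
have hea : eqv (cost G) S' a = Some M.
  have his : is_eq (cost G) S' a M.
    exists mu; split; [move=> k hk; apply: mu0; exact: S'Sk|split => //].
    move=> k hk; apply: muv; exact: S'Sk.
  have [w [hw1 hw2]] := eqv_some his.
  by rewrite hw1 (is_eq_unique S'ne (fun k _ => hmono k) hw2 his).
set A := sum_mu G (fun Rs => (Rs \subset S) && (Rs :&: S' != set0)).
set B := sum_mu G (fun Rs => Rs \subset S :\: S').
have haA : A < a.
  apply: Rnot_le_lt => hle; apply: (HM a ha0 hle); by rewrite hea hE.
have htot : sum_mu G (fun Rs => Rs \subset S) = A + B.
  rewrite (@sum_mu_split n G _ (fun Rs => Rs :&: S' != set0)); congr (_ + _).
  apply: sum_mu_ext => Rs; by rewrite subsetD negbK setI_eq0.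
set T := S :\: S'.
have hsplit : sumR (enum S) mu = a + sumR (enum T) mu.
  rewrite /a !sumR_enum -sumR_add; apply: eq_sumR_in => k _.
  rewrite /T in_setD; case hk': (k \in S'); first by rewrite (S'Sk _ hk') /=; lra.
  case: (k \in S) => /=; lra.
have hTB : sumR (enum T) mu < B by lra.
have Tne : T != set0.
  apply/negP => /eqP hT; move: hTB; rewrite hT enum_set0 sumR_nil.
  rewrite /B -/T hT /sum_mu sumR_zero; first lra.
  move=> Rs; rewrite mem_enum inE => /andP [h1 h2].
  move: h2; rewrite subset0 => /eqP e; by rewrite e eqxx in h1.
split => //.
have hTS : forall k, k \in T -> k \in S by move=> k; rewrite /T in_setD => /andP [].
have [v [x [Hx Hsx]]] := @waterfill _ (cost G) (enum T) mu M B (enum_neq0 Tne) (enum_uniq _)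
  (fun k _ => hmono k) (fun k _ => hc k)
  ltac:(move=> k; rewrite mem_enum => hk; split; [apply: mu0|apply: muv]; exact: hTS)
  (Rlt_le _ _ hTB).
have his : is_eq (cost G) T B v.
  exists x; split; [move=> k hk; case: (Hx k); rewrite ?mem_enum //|split => //].
  move=> k hk; case: (Hx k); rewrite ?mem_enum //.
have [w [hw1 [m' [m'0 [m's m'v]]]]] := eqv_some his.
rewrite /E_G -/T -/B hw1; congr Some.
apply: Rle_antisym; first by apply: (hmax T); rewrite // /E_G -/B hw1.
apply: Rnot_lt_le => hwM.
have : sumR (enum T) m' <= sumR (enum T) mu; last lra.
apply: sumR_le_in => k; rewrite mem_enum => hk.
apply: Rnot_lt_le => hlt.
have := hmono k _ _ (mu0 k (hTS k hk)) (Rlt_le _ _ hlt).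
rewrite muv ?hTS // m'v //; lra.
Qed.

Lemma maxoptL_cons (X : Type) (F : X -> option R) y s :
  maxoptL (map F (y :: s)) = maxopt (F y) (maxoptL (map F s)).
Proof. by []. Qed.

Lemma maxoptL_none (X : eqType) (F : X -> option R) (s : seq X) :
  maxoptL (map F s) = None -> forall x, x \in s -> F x = None.
Proof.
elim: s => [//|y s IH]; rewrite maxoptL_cons.
case hF: (F y) => [a|]; case hr: (maxoptL (map F s)) => [b|] //= _.
move=> x; rewrite in_cons => /orP [/eqP ->//|hx]; exact: IH.
Qed.

Lemma maxoptL_some (X : eqType) (F : X -> option R) (s : seq X) M :
  maxoptL (map F s) = Some M ->
  (forall x v, x \in s -> F x = Some v -> v <= M) /\ exists x, x \in s /\ F x = Some M.
Proof.
elim: s M => [//|y s IH] M; rewrite maxoptL_cons.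
case hF: (F y) => [a|]; case hr: (maxoptL (map F s)) => [b|] //= [<-].
- have [H1 [x [hx hxF]]] := IH b hr.
  split.
  + move=> x' v; rewrite in_cons => /orP [/eqP ->|hx'] hv.
    * rewrite hF in hv; case: hv => <-; apply: Rmax_l.
    * apply: Rle_trans (Rmax_r _ _); exact: H1 hx' hv.
  + rewrite /Rmax; case: Rle_dec => _.
    * by exists x; rewrite in_cons hx orbT.
    * by exists y; rewrite mem_head.
- split; last by exists y; rewrite mem_head.
  move=> x v; rewrite in_cons => /orP [/eqP ->|hx'] hv.
  + rewrite hF in hv; case: hv => <-; lra.
  + by rewrite (maxoptL_none hr hx') in hv.
- have [H1 [x [hx hxF]]] := IH _ hr.
  split; last by exists x; rewrite in_cons hx orbT.
  move=> x' v; rewrite in_cons => /orP [/eqP ->|hx'] hv; first by rewrite hF in hv.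
  exact: H1 hx' hv.
Qed.

Lemma maxoptL_ex (X : eqType) (F : X -> option R) (s : seq X) x v :
  x \in s -> F x = Some v -> exists M, maxoptL (map F s) = Some M.
Proof.
move=> hx hv; case h: (maxoptL (map F s)) => [M|]; first by exists M.
by rewrite (maxoptL_none h hx) in hv.
Qed.

Lemma maxoptL_eq (X : eqType) (F : X -> option R) (s : seq X) x M :
  x \in s -> F x = Some M -> (forall y v, y \in s -> F y = Some v -> v <= M) ->
  maxoptL (map F s) = Some M.
Proof.
move=> hx hM hb; have [M' hM'] := maxoptL_ex hx hM.
have [H1 [y [hy hyF]]] := maxoptL_some hM'.
rewrite hM'; congr Some; apply: Rle_antisym; [exact: hb hy hyF|exact: H1 hx hM].
Qed.

Lemma in_D_GbP n (G : game n) S : in_D_Gb G S = true <-> in_D_G G S.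
Proof. rewrite /in_D_Gb; case: excluded_middle_informative => //. Qed.

Theorem mainTheorem17 (n : nat) (G : game n) :
  (0 < n)%N -> valid_game G ->
  (exists v : R, maxE G = Some v) /\
  ((forall j : 'I_n, continuous_on_nonneg (cost G j)) -> h_G G = maxE G).
Proof.
move=> hn hv.
have hmono : forall k, monoR (cost G k) by move=> k x y; case: hv => h _; apply: h.
have ha : exists v : R, maxE G = Some v.
  set j := Ordinal hn.
  set m0 := sum_mu G (fun Rs => Rs \subset [set j]).
  have his : is_eq (cost G) [set j] m0 (cost G j m0).
    exists (fun _ => m0); split; first by move=> k _; apply: sum_mu_ge0.
    split; first by rewrite enum_set1 sumR_cons sumR_nil; lra.
    by move=> k; rewrite inE => /eqP ->.
  have [w [hw _]] := eqv_some his.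
  apply: (@maxoptL_ex _ (E_G G) _ [set j] w) => //.
  by rewrite mem_filter mem_enum inE andbT; apply/set0Pn; exists j; rewrite inE.
split => // hc.
have [M hM] := ha.
have [Hmax [S0 [hS0 hS0M]]] := maxoptL_some hM.
have hmax : forall T v, T != set0 -> E_G G T = Some v -> v <= M.
  move=> T v hT hTv; apply: (Hmax T v) => //; by rewrite mem_filter mem_enum inE hT.
have hS0ne : S0 != set0 by move: hS0; rewrite mem_filter => /andP [].
have key : forall N (S : {set 'I_n}), (#|S| <= N)%N -> S != set0 -> E_G G S = Some M ->
    exists S1, in_D_G G S1 /\ E_G G S1 = Some M.
  elim=> [|N IH] S hN hS hSM.
    by move: hN; rewrite leqn0 cards_eq0 => /eqP e; rewrite e eqxx in hS.
  case: (classic (in_D_G G S)) => hD; first by exists S.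
  have [S' hS'] : exists S', in_M_G G S S'.
    apply: NNPP => hn'; apply: hD; split => //; split => //; by exists M.
  have [hTne hTM] := core hv hc hSM hmax hS'.
  apply: (IH (S :\: S')) => //.
  have [S'ne [S'S _]] := hS'.
  rewrite cardsD (setIidPr S'S).
  have h1 : (0 < #|S'|)%N by rewrite card_gt0.
  have h2 := subset_leq_card S'S.
  move: hN h1 h2; clear; lia.
have [S1 [hD1 hS1]] := key _ S0 (leqnn _) hS0ne hS0M.
rewrite hM /h_G; apply: (@maxoptL_eq _ (E_G G) _ S1) => //.
  by rewrite mem_filter mem_enum inE andbT; apply/in_D_GbP.
move=> y v; rewrite mem_filter => /andP [/in_D_GbP [hy _] _] hyv.
exact: hmax hy hyv.
Qed.
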